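(* Let $(S,+)$ be a commutative cancellative semigroup with no identity element such that its difference group $S-S$ carries a multiplication making it an integral domain. Then $\mathcal{J}_p=\{p\in\beta S:\text{every }X\in p\text{ is a }J_p\text{-set in }S\}$ is a compact (two-sided) ideal of $(\beta S,+)$.
   Context: $S-S=\{a-b:a,b\in S\}$ is the difference group of $S$ (with $(a-b)+b=a$), containing $S$. $\mathbb{P}$ denotes the set of integral polynomials on $S-S$: polynomial functions $S-S\to S-S$ in one variable with coefficients in $S-S$ and zero constant term. $\mathcal{P}_f(X)$ denotes the set of nonempty finite subsets of $X$, ${}^{\mathbb{N}}S$ the set of sequences $g:\mathbb{N}\to S$, $\mathbb{N}=\{1,2,\dots\}$. For $R\in\mathcal{P}_f(\mathbb{P})$, $L\in\mathcal{P}_f({}^{\mathbb{N}}S)$, $a\in S$, $H\in\mathcal{P}_f(\mathbb{N})$, let $S_{R,L}(a,H)=\{a+f(\sum_{t\in H}g(t)): f\in R, g\in L\}$. $A\subseteq S$ is a $J_p$-set if for every $R\in\mathcal{P}_f(\mathbb{P})$ and $L\in\mathcal{P}_f({}^{\mathbb{N}}S)$ there are $a\in S$, $H\in\mathcal{P}_f(\mathbb{N})$ with $S_{R,L}(a,H)\subseteq A$. $\beta S$ is the Stone–Čech compactification of discrete $S$ (ultrafilters on $S$), with basic open sets $\overline{A}=\{p: A\in p\}$ and operation extended by: $A\in p+q$ iff $\{x\in S: -x+A\in q\}\in p$, where $-x+A=\{s: x+s\in A\}$. An ideal is a subset $I$ with $p+q,q+p\in I$ for all $p\in I$, $q\in\beta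 S$. *)

(* Defs.v *)
From Stdlib Require List.
From mathcomp Require Import all_boot all_order all_algebra.
Set Implicit Arguments. Unset Strict Implicit. Unset Printing Implicit Defensive.
Import GRing.Theory.
Local Open Scope ring_scope.

(* The semigroup S is represented as a subset S of its difference group G,
   where G carries an integral-domain structure (G : idomainType).
   sS is the carrier type of S. *)
Definition sS (G : idomainType) (S : pred G) := {x : G | S x}.

Definition inS (G : idomainType) (S : pred G) (A : sS S -> Prop) (y : G) : Prop :=
  exists t : sS S, proj1_sig t = y /\ A t.

Definition integral_poly (G : idomainType) (f : {poly G}) : Prop := f`_0 = 0.

(* H in P_f(N), N = {1,2,...} : nonempty finite set of positive naturals,
   represented by a duplicate-free nonempty list *)
Definition finpos (H : seq nat) : Prop :=
  H <> [::] /\ uniq H /\ all (fun t => 0 < t)%N H.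

Definition SRL_sub (G : idomainType) (S : pred G) (R : seq {poly G})
  (L : seq (nat -> sS S)) (a : sS S) (H : seq nat) (A : sS S -> Prop) : Prop :=
  forall f g, f \in R -> List.In g L ->
    inS A (proj1_sig a + f.[\sum_(t <- H) proj1_sig (g t)]).

Definition Jp_set (G : idomainType) (S : pred G) (A : sS S -> Prop) : Prop :=
  forall (R : seq {poly G}) (L : seq (nat -> sS S)),
    R <> [::] -> (forall f, f \in R -> integral_poly f) -> L <> [::] ->
    exists (a : sS S) (H : seq nat), finpos H /\ SRL_sub R L a H A.

(* Ultrafilters on a type T; points of the Stone-Cech compactification. *)
Definition ultrafilter (T : Type) (p : (T -> Prop) -> Prop) : Prop :=
  [/\ ~ p (fun _ => False),
      p (fun _ => True),
      (forall A B : T -> Prop, p A -> (forall x, A x -> B x) -> p B),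
      (forall A B : T -> Prop, p A -> p B -> p (fun x => A x /\ B x))
    & (forall A : T -> Prop, p A \/ p (fun x => ~ A x))].

Definition pset T := ((T -> Prop) -> Prop) -> Prop.

(* the extended operation on beta S:
   A \in p + q  iff  {x : -x + A \in q} \in p, with -x + A = {s : x + s \in A} *)
Definition bplus (G : idomainType) (S : pred G)
  (p q : (sS S -> Prop) -> Prop) : (sS S -> Prop) -> Prop :=
  fun A => p (fun x => q (fun s => inS A (proj1_sig x + proj1_sig s))).

Definition bS_ideal (G : idomainType) (S : pred G) (I : pset (sS S)) : Prop :=
  (forall p, I p -> ultrafilter p) /\
  forall p q, I p -> ultrafilter q -> I (bplus p q) /\ I (bplus q p).

(* topology of beta S: basic open sets \bar A = {p : A \in p} *)
Definition bS_open T (U : pset T) : Prop :=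
  forall p, ultrafilter p -> U p ->
    exists A, p A /\ forall q, ultrafilter q -> q A -> U q.

Definition bS_compact T (K : pset T) : Prop :=
  (forall p, K p -> ultrafilter p) /\
  forall (I : Type) (U : I -> pset T),
    (forall i, bS_open (U i)) -> (forall p, K p -> exists i, U i p) ->
    exists F : list I, forall p, K p -> exists i, List.In i F /\ U i p.

Definition Jp_ultra (G : idomainType) (S : pred G) : pset (sS S) :=
  fun p => ultrafilter p /\ forall X, p X -> Jp_set X.

(* Main.v *)
Require Import Defs.
From mathcomp Require Import all_boot all_order all_algebra.
From mathcomp Require classical_sets filter.
From Stdlib Require Import Classical.
Import GRing.Theory.
Local Open Scope ring_scope.

Section Gen.
Variable T : Type.

Lemma u_mono (p : (T -> Prop) -> Prop) A B : ultrafilter p -> p A ->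
  (forall x, A x -> B x) -> p B.
Proof. by case=> _ _ h _ _ pA hAB; exact: h pA hAB. Qed.

Lemma u_ne (p : (T -> Prop) -> Prop) A : ultrafilter p -> p A -> exists x, A x.
Proof.
move=> up pA; apply: NNPP => hn; case: up => h0 _ hm _ _; apply: h0.
by apply: (hm A (fun _ => False) pA) => x Ax; apply: hn; exists x.
Qed.

Lemma u_not (p : (T -> Prop) -> Prop) A : ultrafilter p -> ~ p A -> p (fun x => ~ A x).
Proof. by case=> _ _ _ _ h hn; case: (h A). Qed.

Lemma u_list (A0 : Type) (p : (T -> Prop) -> Prop) (P : A0 -> T -> Prop) (l : list A0) :
  ultrafilter p -> (forall a, List.In a l -> p (P a)) ->
  p (fun x => forall a, List.In a l -> P a x).
Proof.
move=> up; elim: l => [|a l IH] h.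
  by case: up => _ hT hm _ _; apply: (hm _ _ hT) => x _ a [].
have h1 := h a (or_introl erefl).
have h2 := IH (fun b hb => h b (or_intror hb)).
case: up => _ _ hm hI _; apply: (hm _ _ (hI _ _ h1 h2)) => x [Pa Pl] b [<-|hb] //.
exact: Pl.
Qed.

Lemma u_seq (A0 : eqType) (p : (T -> Prop) -> Prop) (P : A0 -> T -> Prop) (l : seq A0) :
  ultrafilter p -> (forall a, a \in l -> p (P a)) ->
  p (fun x => forall a, a \in l -> P a x).
Proof.
move=> up; elim: l => [|a l IH] h.
  by case: up => _ hT hm _ _; apply: (hm _ _ hT) => x _ b.
have h1 := h a (mem_head a l).
have h2 := IH (fun b hb => h b (mem_behead (s:=a :: l) hb)).
case: up => _ _ hm hI _; apply: (hm _ _ (hI _ _ h1 h2)) => x [Pa Pl] b.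
by rewrite in_cons => /orP [/eqP -> | hb] //; exact: Pl.
Qed.

End Gen.
Arguments u_mono {T p A B}.
Arguments u_ne {T p A}.
Arguments u_not {T p A}.
Arguments u_list {T A0 p P l}.
Arguments u_seq {T A0 p P l}.

Section Main.
Variables (G : idomainType) (S : pred G).
Hypothesis S_add : forall x y, S x -> S y -> S (x + y).

Local Notation T := (sS S).

Lemma sS_inj (t u : T) : proj1_sig t = proj1_sig u -> t = u.
Proof.
case: t => x hx; case: u => y hy /= e; subst y.
by rewrite (eq_irrelevance hx hy).
Qed.

Definition splus (x y : T) : T :=
  exist _ (proj1_sig x + proj1_sig y) (S_add _ _ (proj2_sig x) (proj2_sig y)).

Lemma bplus_ultra (p q : (T -> Prop) -> Prop) :
  ultrafilter p -> ultrafilter q -> ultrafilter (bplus p q).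
Proof.
move=> up uq; rewrite /bplus; split.
- move=> h; have [x hx] := u_ne up h.
  have [s [t [_ []]]] := u_ne uq hx.
- have pT : p (fun _ => True) by case: up.
  have qT : q (fun _ => True) by case: uq.
  apply: (u_mono up pT) => x _; apply: (u_mono uq qT) => s _.
  by exists (splus x s).
- move=> A B pA hAB; apply: (u_mono up pA) => x hx.
  apply: (u_mono uq hx) => s [t [e At]]; exists t; split => //; exact: hAB.
- move=> A B pA pB.
  have pAB : p (fun x => q (fun s => inS A (proj1_sig x + proj1_sig s)) /\ q (fun s => inS B (proj1_sig x + proj1_sig s))) by case: up => _ _ _ pI _; exact: pI.
  apply: (u_mono up pAB) => x [hA hB].
  have qAB : q (fun s => inS A (proj1_sig x + proj1_sig s) /\ inS B (proj1_sig x + proj1_sig s))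
    by case: uq => _ _ _ qI _; exact: qI.
  apply: (u_mono uq qAB) => s [[t [et At]] [u [eu Bu]]].
  exists t; split => //; split => //; have -> : t = u by apply: sS_inj; rewrite et eu.
  done.
- move=> A; case: up => h0 h1 pm h3 pC.
  case: (pC (fun x => q (fun s => inS A (proj1_sig x + proj1_sig s)))) => h; [left|right] => //.
  apply: (pm _ _ h) => x hx; apply: (u_mono uq (u_not uq hx)) => s hn.
  exists (splus x s); split => // Ax; apply: hn; by exists (splus x s).
Qed.

Lemma Jp_right (p q : (T -> Prop) -> Prop) :
  Jp_ultra p -> ultrafilter q -> forall X, bplus p q X -> Jp_set X.
Proof.
move=> [up pJ] uq X hX R L hR hRi hL.
have [a [H [fH sub]]] := pJ _ hX R L hR hRi hL.
pose P (f : {poly G}) (g : nat -> T) (s : T) := inS X (proj1_sig a + f.[\sum_(t <- H) proj1_sig (g t)] + proj1_sig s).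
have hq : q (fun s => forall f, f \in R -> forall g, List.In g L -> P f g s).
  apply: (u_seq uq) => f fR; apply: (u_list uq) => g gL.
  have [t [et Bt]] := sub f g fR gL.
  by rewrite /P -et.
have [s hs] := u_ne uq hq.
exists (splus a s), H; split => // f g fR gL.
have := hs f fR g gL; rewrite /P /=.
by rewrite addrAC.
Qed.

Lemma Jp_left (p q : (T -> Prop) -> Prop) :
  Jp_ultra p -> ultrafilter q -> forall X, bplus q p X -> Jp_set X.
Proof.
move=> [up pJ] uq X hX R L hR hRi hL.
have [x hx] := u_ne uq hX.
have [a [H [fH sub]]] := pJ _ hx R L hR hRi hL.
exists (splus x a), H; split => // f g fR gL.
have [t [et Xt]] := sub f g fR gL.
by move: Xt; rewrite et /= addrA.
Qed.

Lemma Jp_compact : bS_compact (@Jp_ultra G S).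
Proof.
split; first by move=> p [].
move=> I U Uopen Ucov.
apply: NNPP => nofin.
pose Bad (D : T -> Prop) := ~ Jp_set D \/ exists i, forall q, ultrafilter q -> q D -> U i q.
pose F (B : T -> Prop) := exists l : list (T -> Prop),
  (forall D, List.In D l -> Bad D) /\ forall x, (forall D, List.In D l -> ~ D x) -> B x.
have key : forall l, (forall D, List.In D l -> Bad D) -> exists Fi : list I,
    forall p, Jp_ultra p -> (forall i, List.In i Fi -> ~ U i p) ->
    forall D, List.In D l -> ~ p D.
  elim => [|D l IH] hl.
    by exists nil => p _ _ D [].
  have [Fi hFi] := IH (fun D' h => hl D' (or_intror h)).
  case: (hl D (or_introl erefl)) => [nJ | [i hi]].
    exists Fi => p Kp hp D' [<- | inl].
      by move=> pD; apply: nJ; exact: Kp.2 _ pD.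
    exact: hFi.
  exists (i :: Fi) => p Kp hp D' [<- | inl].
    by move=> pD; apply: (hp i (or_introl erefl)); exact: hi p Kp.1 pD.
  by apply: hFi => // j hj; apply: hp; right.
have FP : filter.ProperFilter F.
  constructor.
    move=> [l [hl hx]]; have [Fi hFi] := key l hl.
    apply: nofin; exists Fi => p Kp; apply: NNPP => hnot.
    have hp : forall i, List.In i Fi -> ~ U i p by move=> i hi hU; apply: hnot; exists i.
    have hnD := hFi p Kp hp.
    have up := Kp.1.
    have pl : p (fun x => forall D, List.In D l -> ~ D x).
      by apply: (u_list up) => D hD; apply: (u_not up); exact: hnD.
    have [x hx'] := u_ne up pl.
    exact: (hx x hx').
  constructor.
  - by exists nil; split => // D [].
  - move=> A B [l1 [h1 hx1]] [l2 [h2 hx2]]; exists (l1 ++ l2); split.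
      by move=> D hD; case: (List.in_app_or _ _ _ hD) => ?; [apply: h1 | apply: h2].
    move=> x hx; split.
      by apply: hx1 => D hD; apply: hx; apply: List.in_or_app; left.
    by apply: hx2 => D hD; apply: hx; apply: List.in_or_app; right.
  - move=> A B hAB [l [hl hx]]; exists l; split => // x h; apply: hAB; exact: hx.
have [r [rU Fr]] := filter.ultraFilterLemma FP.
have rP := @filter.ultra_proper _ _ rU.
have rF := @filter.filter_filter _ _ rP.
have rultra : ultrafilter r.
  split.
  - exact: (@filter.filter_not_empty _ r rP).
  - exact: (@filter.filterT _ r rF).
  - by move=> A B rA hAB; apply: (@filter.filterS _ r rF A B) => // x; apply: hAB.
  - by move=> A B rA rB; apply: (@filter.filterI _ r rF A B).
  - by move=> A; apply: (filter.in_ultra_setVsetC A rU).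
have notin : forall D, Bad D -> ~ r D.
  move=> D hD rD.
  have rnD : r (fun x => ~ D x).
    apply: Fr; exists [:: D]; split; first by move=> D' [<-|[]].
    by move=> x h; apply: (h D (or_introl erefl)).
  have := u_ne rultra (let: And5 _ _ _ hI _ := rultra in hI _ _ rD rnD).
  by case=> x [].
have rK : Jp_ultra r.
  split => // X rX; apply: NNPP => nJ; apply: (notin X) => //; by left.
have [i Ui] := Ucov r rK.
have [A [rA hA]] := Uopen i r rultra Ui.
by apply: (notin A) => //; right; exists i.
Qed.
End Main.

Theorem lemma5p1 (G : idomainType) (S : pred G)
  (S_add : forall x y, S x -> S y -> S (x + y))
  (S_diff : forall z : G, exists a b, S a /\ S b /\ z = a - b)
  (S_noid : ~ (exists e, S e /\ forall s, S s -> e + s = s)) :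
  bS_compact (@Jp_ultra G S) /\ bS_ideal (@Jp_ultra G S).
Proof.
split; first exact: Jp_compact.
split; first by move=> p [].
move=> p q Kp uq; split; split.
- exact: bplus_ultra Kp.1 uq.
- exact: Jp_right.
- exact: bplus_ultra uq Kp.1.
- exact: Jp_left.
Qed.
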